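(* For any signature $\Sigma$ and any reduced $\Sigma$-forest $f$, the coproduct of $\mathbf N(T(\Sigma))$ satisfies $$\Delta E_f=\sum_{I_1,I_2\subseteq[\deg f]}[(I_1,I_2)\text{ is } f\text{-admissible}]\;E_{f(I_1)}\otimes E_{f(I_2)}.$$
   Context: $\mathbb K$ is a field of characteristic zero, $\mathbb N=\{0,1,2,\dots\}$, $[n]=\{1,\dots,n\}$, and $[P]$ is $1$ if $P$ holds and $0$ otherwise. A signature is a set $\Sigma$ with an arity map $|\cdot|:\Sigma\to\mathbb N$; $\Sigma(n)$ is the set of elements of arity $n$. A $\Sigma$-term is either the leaf $\bot$ or $s(t_1,\dots,t_n)$ with $s\in\Sigma(n)$ and $\Sigma$-terms $t_i$ (a planar rooted tree with internal nodes with $n$ children decorated by $\Sigma(n)$); its degree is its number of internal nodes, its arity $|t|$ its number of leaves. $T(\Sigma)$ is the free nonsymmetric operad on $\Sigma$: $t[t_1,\dots,t_{|t|}]$ grafts the root of $t_i$ onto the $i$-th leaf of $t$ (leaves numbered left to right), unit $\bot$. A $\Sigma$-forest is a finite word of terms, of degree the sum of the degrees; it is reduced if no term is $\bot$; $\mathrm{rd}(w)$ deletes the terms equal to $\bot$ from a word $w$ of terms. The internal nodes of a forest $f$ are identified with $1,\dots,\deg f$ by the left-to-right preorder traversal (terms taken from left to right). For a reduced forest $f$ and $I\subseteq[\deg f]$, the restriction $f(I)$ is the reduced forest obtained by keeping only the internal nodes of $f$ that are in $I$ (with their decorations and arities) and the edges between them: every child position of a kept node which is occupied in $f$ by a leaf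 or by a node not in $I$ becomes a leaf, each kept node whose parent is not kept (or which is a root) becomes the root of a new term, and the resulting terms are ordered by the preorder rank in $f$ of their roots. In particular $f(\emptyset)=\epsilon$. A pair $(I_1,I_2)$ is $f$-admissible if $I_1\sqcup I_2=[\deg f]$, every ancestor of a node in $I_1$ is in $I_1$, and every descendant of a node in $I_2$ is in $I_2$. $\mathbf N(T(\Sigma))$ is the $\mathbb K$-vector space with basis $E_f$, $f$ reduced $\Sigma$-forest, with product $E_{f_1}E_{f_2}=E_{f_1f_2}$ and coproduct the unique algebra morphism with $\Delta E_t=\sum E_{\mathrm{rd}(t')}\otimes E_{\mathrm{rd}(t_1\cdots t_{|t'|})}$ for terms $t\ne\bot$, summed over all $t',t_1,\dots,t_{|t'|}\in T(\Sigma)$ with $t=t'[t_1,\dots,t_{|t'|}]$ (with $E_{\mathrm{rd}(\bot)}=E_\epsilon$). *)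

(* Defs.v *)
From HB Require Import structures.
From mathcomp Require Import all_boot all_order all_algebra.
From mathcomp Require Import boolp classical_sets fsbigop.

Set Implicit Arguments.
Unset Strict Implicit.
Unset Printing Implicit Defensive.
Import GRing.Theory.

Local Open Scope ring_scope.

(* A signature is a type S together with an arity map ar : S -> nat.        *)
(* Sigma-terms: planar rooted trees; [Leaf] is the leaf "bot", and          *)
(* [Node s ts] is s(t_1,...,t_n).  The arity constraint |ts| = ar s is      *)
(* imposed by the predicate [wf ar].                                         *)

Inductive term (S : Type) : Type :=
| Leaf : term S
| Node : S -> seq (term S) -> term S.
Arguments Leaf {S}.

HB.instance Definition _ (S : Type) := gen_eqMixin (term S).
HB.instance Definition _ (S : Type) := gen_choiceMixin (term S).

Definition forest (S : Type) := seq (term S).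

Section Terms.
Variables (S : Type) (ar : S -> nat).

Definition isLeaf (t : term S) : bool := if t is Leaf then true else false.

Fixpoint wf (t : term S) : bool :=
  match t with
  | Leaf => true
  | Node s ts => (size ts == ar s) && all wf ts
  end.

Fixpoint deg (t : term S) : nat :=
  match t with
  | Leaf => 0
  | Node _ ts => (sumn (map deg ts)).+1
  end.

Definition degf (f : forest S) : nat := sumn (map deg f).

Fixpoint nleaves (t : term S) : nat :=
  match t with
  | Leaf => 1
  | Node _ ts => sumn (map nleaves ts)
  end.

Definition reduced (f : forest S) : bool := all (fun t => ~~ isLeaf t && wf t) f.

Definition rd (f : forest S) : forest S := [seq t <- f | ~~ isLeaf t].

(* Grafting t[t_1,...,t_k]: the i-th leaf of t (left to right) is replaced by
   t_i.  [graft_go t us] consumes the needed prefix of us and returns the rest. *)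
Fixpoint graft_go (t : term S) (us : seq (term S)) : term S * seq (term S) :=
  match t with
  | Leaf => match us with [::] => (Leaf, [::]) | u :: us' => (u, us') end
  | Node s ts =>
    let fix gos (ts : seq (term S)) (us : seq (term S)) :=
        match ts with
        | [::] => ([::], us)
        | t1 :: ts' =>
          let r1 := graft_go t1 us in
          let r2 := gos ts' r1.2 in
          (r1.1 :: r2.1, r2.2)
        end in
    let r := gos ts us in (Node s r.1, r.2)
  end.

(* t[t_1, ..., t_{|t|}] (used only when size us = nleaves t) *)
Definition graft (t : term S) (us : seq (term S)) : term S := (graft_go t us).1.

(* Preorder numbering of internal nodes (0-based: node k here is node k+1  *)
(* of the paper), ancestors, restriction and admissibility.                 *)

(* For the term t whose root has preorder index n and whose proper ancestors
   are A, list (in preorder) for every internal node the list of its proper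
   ancestors. *)
Fixpoint anc_go (A : seq nat) (n : nat) (t : term S) : seq (seq nat) :=
  match t with
  | Leaf => [::]
  | Node _ ts =>
    let fix gos (m : nat) (ts : seq (term S)) :=
        match ts with
        | [::] => [::]
        | u :: ts' => anc_go (n :: A) m u ++ gos (m + deg u) ts'
        end in
    A :: gos n.+1 ts
  end.

Fixpoint ancs_from (m : nat) (f : forest S) : seq (seq nat) :=
  match f with
  | [::] => [::]
  | t :: f' => anc_go [::] m t ++ ancs_from (m + deg t) f'
  end.

Definition is_anc (f : forest S) (i j : nat) : bool :=
  i \in nth [::] (ancs_from 0 f) j.

(* Restriction.  [restr_go P n t], for the term t whose root has preorder
   index n, returns (c, F) where c is the part of the restriction attached to
   the parent of the root of t (bot if the root is not kept), and F is the list
   (in preorder of roots) of the new terms whose roots lie strictly below. *)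
Fixpoint restr_go (P : pred nat) (n : nat) (t : term S) : term S * forest S :=
  match t with
  | Leaf => (Leaf, [::])
  | Node s ts =>
    let fix gos (m : nat) (ts : seq (term S)) :=
        match ts with
        | [::] => [::]
        | u :: ts' => restr_go P m u :: gos (m + deg u) ts'
        end in
    let rs := gos n.+1 ts in
    if P n then (Node s (map fst rs), flatten (map snd rs))
    else (Leaf, flatten [seq rd [:: r.1] ++ r.2 | r <- rs])
  end.

Fixpoint restr_from (P : pred nat) (m : nat) (f : forest S) : forest S :=
  match f with
  | [::] => [::]
  | t :: f' =>
    let r := restr_go P m t in rd [:: r.1] ++ r.2 ++ restr_from P (m + deg t) f'
  end.

Definition in_set_nat (d : nat) (I : {set 'I_d}) (k : nat) : bool :=
  if (insub k : option 'I_d) is Some i then i \in I else false.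

Definition restr (f : forest S) (I : {set 'I_(degf f)}) : forest S :=
  restr_from (in_set_nat I) 0 f.

Definition admissible (f : forest S) (I1 I2 : {set 'I_(degf f)}) : bool :=
  [&& [disjoint I1 & I2], [forall k : 'I_(degf f), (k \in I1) || (k \in I2)],
      [forall i : 'I_(degf f), forall j : 'I_(degf f),
          ((j \in I1) && is_anc f i j) ==> (i \in I1)] &
      [forall i : 'I_(degf f), forall j : 'I_(degf f),
          ((i \in I2) && is_anc f i j) ==> (j \in I2)]].

End Terms.

(* N(T(Sigma)) (+) N(T(Sigma)): an element is given by its coefficient     *)
(* function on the basis E_{g1} (x) E_{g2}, (g1, g2) pairs of forests.      *)

Section Coproduct.
Variables (K : fieldType) (S : Type) (ar : S -> nat).

Definition tensor := forest S -> forest S -> K.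

(* product in N (x) N : (E_a (x) E_b)(E_c (x) E_d) = E_{ac} (x) E_{bd} *)
Definition tmul (x y : tensor) : tensor := fun g1 g2 =>
  \sum_(i < (size g1).+1) \sum_(j < (size g2).+1)
     x (take i g1) (take j g2) * y (drop i g1) (drop j g2).

Definition tunit : tensor := fun g1 g2 => (nilp g1 && nilp g2)%:R.

Definition decomp (t : term S) : set (term S * seq (term S)) :=
  [set p | [/\ wf ar p.1, all (wf ar) p.2, size p.2 = nleaves p.1
             & graft p.1 p.2 = t]].

(* Delta E_t = sum E_{rd(t')} (x) E_{rd(t_1 ... t_{|t'|})} *)
Definition DeltaT (t : term S) : tensor := fun g1 g2 : forest S =>
  (\sum_(p \in decomp t) (((rd [:: p.1] == g1) && (rd p.2 == g2))%:R : K))%R.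

(* Delta extended as an algebra morphism: Delta E_{t1...tn} = prod Delta E_ti *)
Definition Delta (f : forest S) : tensor :=
  foldr (fun t acc => tmul (DeltaT t) acc) tunit f.

End Coproduct.

(* Main.v *)
Require Import Defs.
From HB Require Import structures.
From mathcomp Require Import all_boot all_order all_algebra.
From mathcomp Require Import boolp classical_sets fsbigop.
From mathcomp Require Import zify.
Import GRing.Theory.

Set Implicit Arguments.
Unset Strict Implicit.
Unset Printing Implicit Defensive.

Section Gen.
Variable S : Type.
Notation tm := (term S).

Fixpoint allP (Q : tm -> Prop) (ts : seq tm) : Prop :=
  match ts with [::] => True | u :: ts' => Q u /\ allP Q ts' end.

Lemma allP_all (Q : tm -> Prop) ts : (forall u, Q u) -> allP Q ts.
Proof. by move=> H; elim: ts => //= u ts ->; split. Qed.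

Definition term_ind' (Q : tm -> Prop) (HL : Q Leaf)
  (HN : forall s ts, allP Q ts -> Q (Node s ts)) : forall t, Q t :=
  fix IH t := match t with
  | Leaf => HL
  | Node s ts => HN s ts ((fix F ts : allP Q ts :=
       match ts with [::] => I | u :: ts' => conj (IH u) (F ts') end) ts)
  end.

Fixpoint kids (A : Type) (F : nat -> tm -> A) (m : nat) (ts : seq tm) : seq A :=
  match ts with [::] => [::] | u :: ts' => F m u :: kids F (m + deg u) ts' end.

Lemma size_kids A (F : nat -> tm -> A) m ts : size (kids F m ts) = size ts.
Proof. by elim: ts m => //= u ts IH m; rewrite IH. Qed.

Lemma map_kids A B (G : A -> B) (F : nat -> tm -> A) m ts :
  map G (kids F m ts) = kids (fun m u => G (F m u)) m ts.
Proof. by elim: ts m => //= u ts IH m; rewrite IH. Qed.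

Lemma kids_const A (c : A) m ts : kids (fun _ _ => c) m ts = nseq (size ts) c.
Proof. by elim: ts m => //= u ts IH m; rewrite IH. Qed.

Lemma kids_id m ts : kids (fun _ u => u) m ts = ts.
Proof. by elim: ts m => //= u ts IH m; rewrite IH. Qed.

Lemma kids_ext_cond A (H : nat -> tm -> bool) (F G : nat -> tm -> A) ts m :
  allP (fun u => forall m, H m u -> F m u = G m u) ts ->
  all id (kids H m ts) -> kids F m ts = kids G m ts.
Proof.
elim: ts m => //= u ts IH m [Hu Hts] /andP[h1 h2].
by rewrite Hu // IH.
Qed.

Lemma kids_ext A (F G : nat -> tm -> A) ts m :
  allP (fun u => forall m, F m u = G m u) ts -> kids F m ts = kids G m ts.
Proof. by elim: ts m => //= u ts IH m [Hu Hts]; rewrite Hu IH. Qed.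

Lemma kids_congr A (P P' : pred nat) (F G : nat -> tm -> A) ts :
  allP (fun u => forall m m', (forall k, k < deg u -> P (k + m) = P' (k + m')) ->
     F m u = G m' u) ts ->
  forall m m', (forall k, k < sumn (map (@deg S) ts) -> P (k + m) = P' (k + m')) ->
  kids F m ts = kids G m' ts.
Proof.
elim: ts => //= u ts IH [Hu Hts] m m' HP.
rewrite (Hu m m'); last by move=> k Hk; apply: HP; lia.
rewrite (IH Hts (m + deg u) (m' + deg u)) // => k Hk.
have := HP (k + deg u); rewrite -!addnA [deg u + m]addnC [deg u + m']addnC.
by apply; lia.
Qed.

Lemma all_kids_true m ts : all id (kids (fun _ _ => true) m ts).
Proof. by rewrite kids_const; elim: (size ts). Qed.

Lemma restr_go_node P n s ts :
  restr_go P n (Node s ts) =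
  let rs := kids (restr_go P) n.+1 ts in
  if P n then (Node s (map fst rs), flatten (map snd rs))
  else (Leaf, flatten [seq rd [:: r.1] ++ r.2 | r <- rs]).
Proof.
rewrite /=; suff -> : (fix gos (m : nat) (ts : seq tm) {struct ts} :
  seq (tm * forest S) := match ts with [::] => [::] | u :: ts' =>
  restr_go P m u :: gos (m + deg u) ts' end) n.+1 ts = kids (restr_go P) n.+1 ts by [].
by elim: ts n.+1 => //= u ts IH m; rewrite IH.
Qed.

End Gen.


Section Gen2.
Variable S : Type.
Notation tm := (term S).

Lemma anc_go_node A n (s : S) (ts : seq tm) :
  anc_go A n (Node s ts) = A :: flatten (kids (anc_go (n :: A)) n.+1 ts).
Proof. by rewrite /=; congr cons; elim: ts n.+1 => //= u ts IH m; rewrite IH. Qed.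

Fixpoint ggos (ts us : seq tm) : seq tm * seq tm :=
  match ts with
  | [::] => ([::], us)
  | t1 :: ts' => let r1 := graft_go t1 us in let r2 := ggos ts' r1.2 in
                 (r1.1 :: r2.1, r2.2)
  end.

Lemma graft_go_node (s : S) ts us :
  graft_go (Node s ts) us = ((Node s (ggos ts us).1), (ggos ts us).2).
Proof. by []. Qed.

Fixpoint NoneP (P : pred nat) (n : nat) (t : tm) : bool :=
  match t with
  | Leaf => true
  | Node s ts => ~~ P n && (let fix g m ts := match ts with [::] => true
       | u :: ts' => NoneP P m u && g (m + deg u) ts' end in g n.+1 ts)
  end.

Lemma NoneP_node P n (s : S) (ts : seq tm) :
  NoneP P n (Node s ts) = ~~ P n && all id (kids (NoneP P) n.+1 ts).
Proof. by rewrite /=; congr andb; elim: ts n.+1 => //= u ts IH m; rewrite IH. Qed.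

Fixpoint UCs (P : pred nat) (n : nat) (t : tm) : bool :=
  match t with
  | Leaf => true
  | Node s ts => let fix g m ts := match ts with [::] => true
       | u :: ts' => (if P n then UCs P m u else NoneP P m u) && g (m + deg u) ts' end
     in g n.+1 ts
  end.

Lemma UCs_node P n (s : S) (ts : seq tm) :
  UCs P n (Node s ts) = if P n then all id (kids (UCs P) n.+1 ts)
                        else all id (kids (NoneP P) n.+1 ts).
Proof. by rewrite /=; case: (P n); elim: ts n.+1 => //= u ts IH m; rewrite IH. Qed.

Fixpoint cut (P : pred nat) (n : nat) (t : tm) : tm * seq tm :=
  match t with
  | Leaf => (Leaf, [:: Leaf])
  | Node s ts => if P n then
      let cs := (let fix g m ts := match ts with [::] => [::]
             | u :: ts' => cut P m u :: g (m + deg u) ts' end in g n.+1 ts) in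
      (Node s (map fst cs), flatten (map snd cs))
     else (Leaf, [:: Node s ts])
  end.

Lemma cut_node P n (s : S) (ts : seq tm) :
  cut P n (Node s ts) = if P n then
     (Node s (map fst (kids (cut P) n.+1 ts)), flatten (map snd (kids (cut P) n.+1 ts)))
     else (Leaf, [:: Node s ts]).
Proof.
rewrite /=; case: (P n) => //.
suff -> : (fix g (m : nat) (ts : seq tm) {struct ts} : seq (tm * seq tm) :=
  match ts with [::] => [::] | u :: ts' => cut P m u :: g (m + deg u) ts' end) n.+1 ts
  = kids (cut P) n.+1 ts by [].
by elim: ts n.+1 => //= u ts IH m; rewrite IH.
Qed.

Definition agree (P P' : pred nat) n n' d := forall k, k < d -> P (k + n) = P' (k + n').

Lemma agree_node P P' n n' (s : S) (ts : seq tm) : agree P P' n n' (deg (Node s ts)) ->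
  P n = P' n' /\ agree P P' n.+1 n'.+1 (sumn (map (@deg S) ts)).
Proof.
move=> H; split; first by apply: (H 0).
move=> k Hk; rewrite -!addSnnS; apply: H => /=; lia.
Qed.

Lemma restr_go_congr (t : tm) P P' n n' : agree P P' n n' (deg t) ->
  restr_go P n t = restr_go P' n' t.
Proof.
elim/term_ind': t n n' => // s ts IH n n' /agree_node [E H].
by rewrite !restr_go_node /= E (kids_congr IH H).
Qed.

Lemma NoneP_congr (t : tm) P P' n n' : agree P P' n n' (deg t) ->
  NoneP P n t = NoneP P' n' t.
Proof.
elim/term_ind': t n n' => // s ts IH n n' /agree_node [E H].
by rewrite !NoneP_node /= E (kids_congr IH H).
Qed.

Lemma UCs_congr (t : tm) P P' n n' : agree P P' n n' (deg t) ->
  UCs P n t = UCs P' n' t.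
Proof.
elim/term_ind': t n n' => // s ts IH n n' /agree_node [E H].
rewrite !UCs_node /= E (kids_congr IH H) //.
by rewrite (kids_congr (allP_all _ (fun u m m' => @NoneP_congr u P P' m m')) H).
Qed.

Lemma cut_congr (t : tm) P P' n n' : agree P P' n n' (deg t) ->
  cut P n t = cut P' n' t.
Proof.
elim/term_ind': t n n' => // s ts IH n n' /agree_node [E H].
by rewrite !cut_node /= E (kids_congr IH H).
Qed.

End Gen2.


Section Props.
Variable S : Type.
Notation tm := (term S).

Lemma NoneP_zero (t : tm) P n : NoneP P n t -> forall k, k < deg t -> P (k + n) = false.
Proof.
elim/term_ind': t n => // s ts IH n; rewrite NoneP_node => /andP[Pn H] [|k] /=.
  by move/negPf: Pn.
rewrite addSnnS ltnS; elim: ts IH (n.+1) k H => //= u ts IHl [Hu Hts] m k /andP[h1 h2] Hk.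
case: (ltnP k (deg u)) => Hku; first exact: Hu.
have -> : k + m = (k - deg u) + (m + deg u) by lia.
apply: IHl => //; lia.
Qed.

Lemma NoneP_pred0 (t : tm) n : NoneP (fun _ => false) n t.
Proof.
elim/term_ind': t n => // s ts IH n; rewrite NoneP_node /=.
by rewrite (kids_ext (G := fun _ _ => true)) ?all_kids_true //;
  elim: ts IH {n} => //= u ts IHl [Hu Hts]; split => //; exact: IHl.
Qed.

Lemma allP_impl (Q1 Q2 : tm -> Prop) ts : (forall u, Q1 u -> Q2 u) -> allP Q1 ts -> allP Q2 ts.
Proof. by move=> H; elim: ts => //= u ts IH [h1 h2]; split; auto. Qed.

Lemma flatten_nil_nseq (A : Type) k : flatten (nseq k ([::] : seq A)) = [::].
Proof. by elim: k. Qed.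

Lemma restr_none (t : tm) P n : NoneP P n t -> restr_go P n t = (Leaf, [::]).
Proof.
elim/term_ind': t n => // s ts IH n; rewrite NoneP_node restr_go_node /= => /andP[Pn H].
rewrite (negPf Pn) (kids_ext_cond (G := fun _ _ => (Leaf, [::])) IH H).
by rewrite kids_const map_nseq /= flatten_nil_nseq.
Qed.

Lemma restr_none_neg (t : tm) P n : NoneP P n t -> restr_go (fun k => ~~ P k) n t = (t, [::]).
Proof.
elim/term_ind': t n => // s ts IH n; rewrite NoneP_node restr_go_node /= => /andP[Pn H].
rewrite Pn (kids_ext_cond (G := fun _ u => (u, [::])) IH H).
by rewrite !map_kids /= kids_id kids_const flatten_nil_nseq.
Qed.


Lemma rd_flatten (L : seq (seq tm)) : rd (flatten L) = flatten (map (@rd S) L).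
Proof. by elim: L => //= a L <-; rewrite /rd filter_cat. Qed.

Lemma cut_restr (t : tm) P n : UCs P n t -> restr_go P n t = ((cut P n t).1, [::]).
Proof.
elim/term_ind': t n => // s ts IH n; rewrite UCs_node restr_go_node cut_node /=.
case Pn: (P n) => H.
  rewrite (kids_ext_cond (G := fun m u => ((cut P m u).1, [::])) IH H).
  by rewrite !map_kids /= kids_const flatten_nil_nseq.
have HN := allP_all ts (fun u m => @restr_none u P m).
rewrite (kids_ext_cond (G := fun _ _ => (Leaf, [::])) HN H).
by rewrite kids_const map_nseq /= flatten_nil_nseq.
Qed.

Lemma cut_restr_neg (t : tm) P n : UCs P n t ->
  rd (cut P n t).2 = rd [:: (restr_go (fun k => ~~ P k) n t).1] ++
                        (restr_go (fun k => ~~ P k) n t).2.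
Proof.
elim/term_ind': t n => // s ts IH n H.
case Pn: (P n).
  move: H; rewrite UCs_node cut_node restr_go_node /= Pn /= => H.
  rewrite rd_flatten -map_comp map_kids.
  rewrite (kids_ext_cond (G := fun m u => rd [:: (restr_go (fun k => ~~ P k) m u).1] ++
                        (restr_go (fun k => ~~ P k) m u).2) IH H).
  by rewrite map_kids.
have HN : NoneP P n (Node s ts) by rewrite NoneP_node Pn; move: H; rewrite UCs_node Pn.
by rewrite (restr_none_neg HN) cut_node Pn /= ?cats0.
Qed.

Lemma agree_cons P P' n n' d : P n = P' n' -> agree P P' n.+1 n'.+1 d ->
  agree P P' n n' d.+1.
Proof. by move=> E H [|k] Hk //=; rewrite !addSnnS; apply: (H k). Qed.

Lemma agree_cat P P' m m' d1 d2 : agree P P' m m' d1 ->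
  agree P P' (m + d1) (m' + d1) d2 -> agree P P' m m' (d1 + d2).
Proof.
move=> H1 H2 k Hk; case: (ltnP k d1) => Hkd; first exact: (H1 k).
have -> : k + m = (k - d1) + (m + d1) by lia.
have -> : k + m' = (k - d1) + (m' + d1) by lia.
apply: (H2 (k - d1)); lia.
Qed.

Lemma agree_false P P' m m' d : (forall k, k < d -> P (k + m) = false) ->
  (forall k, k < d -> P' (k + m') = false) -> agree P P' m m' d.
Proof. by move=> H1 H2 k Hk; rewrite H1 // H2. Qed.

Lemma cut_inj (t : tm) P P' n n' : UCs P n t -> UCs P' n' t ->
  (cut P n t).1 = (cut P' n' t).1 -> agree P P' n n' (deg t).
Proof.
elim/term_ind': t n n' => [n n' _ _ _ k|s ts IH n n']; first by rewrite /= ltn0.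
rewrite !UCs_node !cut_node.
case Pn: (P n); case Pn': (P' n') => // H H' /= E.
- apply: agree_cons; first by rewrite Pn Pn'.
  case: E => E; elim: ts IH (n.+1) (n'.+1) H H' E {Pn Pn'} => // u ts IHl [Hu Hts] m m'
     /= /andP[h1 h2] /andP[h1' h2'] [E1 E2].
  by apply: agree_cat; [exact: Hu | exact: IHl].
- apply: agree_cons; first by rewrite Pn Pn'.
  elim: ts IH (n.+1) (n'.+1) H H' {E Pn Pn'} => // u ts IHl [Hu Hts] m m'
     /= /andP[h1 h2] /andP[h1' h2'].
  apply: agree_cat; last exact: IHl.
  by apply: agree_false; apply: NoneP_zero.
Qed.

End Props.


Section Graft.
Variables (S : Type) (ar : S -> nat).
Notation tm := (term S).

Lemma ggos_cat_gen (ts : seq tm) :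
  allP (fun t => forall us rest, size us = nleaves t ->
          graft_go t (us ++ rest) = ((graft_go t us).1, rest)) ts ->
  forall us rest, size us = sumn (map (@nleaves S) ts) ->
  ggos ts (us ++ rest) = ((ggos ts us).1, rest).
Proof.
elim: ts => [|u ts IH] /=.
  by move=> _ [|? ?] rest.
move=> [Hu Hts] us rest Hs.
rewrite -(cat_take_drop (nleaves u) us) -catA.
rewrite Hu ?size_take_min; last by lia.
rewrite (Hu _ (drop (nleaves u) us)) ?size_take_min; last by lia.
rewrite /= IH // size_drop; lia.
Qed.

Lemma graft_cat (t : tm) us rest : size us = nleaves t ->
  graft_go t (us ++ rest) = ((graft_go t us).1, rest).
Proof.
elim/term_ind': t us rest => [|s ts IH] us rest.
  by case: us => [|u [|? ?]].
by move=> Hs; rewrite !graft_go_node /= ggos_cat_gen.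
Qed.

Lemma ggos_cat (ts : seq tm) us rest : size us = sumn (map (@nleaves S) ts) ->
  ggos ts (us ++ rest) = ((ggos ts us).1, rest).
Proof. by apply: ggos_cat_gen; apply: allP_all => u; apply: graft_cat. Qed.

Lemma ggos_flatten (cs : seq (tm * seq tm)) :
  all (fun c => size c.2 == nleaves c.1) cs ->
  ggos (map fst cs) (flatten (map snd cs)) = (map (fun c => graft c.1 c.2) cs, [::]).
Proof.
elim: cs => //= c cs IH /andP[/eqP Hc Hcs].
by rewrite graft_cat //= IH.
Qed.

Fixpoint splitL (A : Type) (ns : seq nat) (us : seq A) : seq (seq A) :=
  if ns is n :: ns' then take n us :: splitL ns' (drop n us) else [::].

Lemma splitL_flatten (A : Type) ns (us : seq A) : sumn ns = size us ->
  flatten (splitL ns us) = us.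
Proof.
elim: ns us => [|n ns IH] us /=; first by case: us.
by move=> H; rewrite IH ?cat_take_drop // size_drop; lia.
Qed.

Lemma splitL_size (A : Type) ns (us : seq A) : sumn ns = size us ->
  map size (splitL ns us) = ns.
Proof.
elim: ns us => [|n ns IH] us //= H.
rewrite size_take_min IH ?size_drop; last by lia.
by congr cons; lia.
Qed.

Lemma cut_decomp (t : tm) P n : wf ar t ->
  let c := cut P n t in
  [/\ wf ar c.1, all (wf ar) c.2, size c.2 = nleaves c.1 & graft c.1 c.2 = t].
Proof.
elim/term_ind': t n => [|s ts IH] n; first by move=> _ /=.
rewrite cut_node /=; case: (P n) => /andP[/eqP Hs Hw] /=; last first.
  by rewrite Hs eqxx Hw.
have : [/\ all (wf ar) (map fst (kids (cut P) n.+1 ts)),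
           all (wf ar) (flatten (map snd (kids (cut P) n.+1 ts))),
           all (fun c => size c.2 == nleaves c.1) (kids (cut P) n.+1 ts) &
           map (fun c => graft c.1 c.2) (kids (cut P) n.+1 ts) = ts].
  elim: ts IH n.+1 Hw {Hs} => //= u ts IHl [Hu Hts] m /andP[wu wts].
  have [h1 h2 h3 h4] := Hu m wu; have [k1 k2 k3 k4] := IHl Hts (m + deg u) wts.
  by rewrite h1 all_cat h2 k1 k2 k3 h3 eqxx h4 k4.
move=> [h1 h2 h3 h4]; split => //.
- by rewrite size_map size_kids Hs eqxx h1.
- rewrite size_flatten /shape -map_comp; congr sumn.
  by elim: (kids (cut P) n.+1 ts) h3 => //= c cs IHc /andP[/eqP -> /IHc ->].
- by rewrite /graft graft_go_node /= ggos_flatten // h4.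
Qed.

Lemma cut_exists (t' : tm) us : size us = nleaves t' ->
  exists P, UCs P 0 (graft t' us) /\ cut P 0 (graft t' us) = (t', us).
Proof.
elim/term_ind': t' us => [|s ts' IH] us.
  case: us => [|u [|? ?]] // _; exists (fun _ => false); rewrite /graft /=.
  case: u => [|s ts] //; rewrite UCs_node cut_node /=; split => //.
  by rewrite (kids_ext (G := fun _ _ => true)) ?all_kids_true //;
    apply: allP_all => u m; apply: NoneP_pred0.
move=> Hs.
set segs := splitL (map (@nleaves S) ts') us.
have Hsz : map size segs = map (@nleaves S) ts' by rewrite splitL_size.
have Hfl : flatten segs = us by rewrite splitL_flatten.
have Hall : all (fun c => size c.2 == nleaves c.1) (zip ts' segs).
  by elim: ts' segs Hsz {IH Hs Hfl} => [|u ts IHl] [|sg sgs] //= [-> /IHl ->]; rewrite eqxx.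
have Hsz' : size segs = size ts' by rewrite -(size_map size) Hsz size_map.
have E1 : map fst (zip ts' segs) = ts' by rewrite -/(unzip1 _) unzip1_zip // Hsz'.
have E2 : map snd (zip ts' segs) = segs by rewrite -/(unzip2 _) unzip2_zip // Hsz'.
have Hg : graft (Node s ts') us = Node s (map (fun c => graft c.1 c.2) (zip ts' segs)).
  by have := ggos_flatten Hall; rewrite E1 E2 Hfl /graft graft_go_node => ->.
rewrite Hg.
have : exists Pc, all id (kids (UCs Pc) 0 (map (fun c => graft c.1 c.2) (zip ts' segs)))
          /\ kids (cut Pc) 0 (map (fun c => graft c.1 c.2) (zip ts' segs)) = zip ts' segs.
  elim: ts' segs IH Hsz {Hs Hfl Hall Hsz' E1 E2 Hg} => [|u ts IHl] [|sg sgs] //=.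
    by move=> _ _; exists (fun _ => false).
  move=> [Hu Hts] [Hsg Hsgs].
  have [Pu [Hu1 Hu2]] := Hu sg Hsg.
  have [Pr [Hr1 Hr2]] := IHl sgs Hts Hsgs.
  set d := deg (graft u sg).
  exists (fun k => if k < d then Pu k else Pr (k - d)).
  have Ag1 : agree (fun k => if k < d then Pu k else Pr (k - d)) Pu 0 0 d.
    by move=> k Hk; rewrite addn0 Hk.
  have Ag2 : agree (fun k => if k < d then Pu k else Pr (k - d)) Pr (0 + d) 0
                (sumn (map (@deg S) (map (fun c => graft c.1 c.2) (zip ts sgs)))).
    by move=> k Hk; rewrite add0n addn0 ifF ?addnK //; lia.
  rewrite (UCs_congr Ag1) (cut_congr Ag1) Hu1 Hu2.
  rewrite (kids_congr (allP_all _ (fun u m m' => @UCs_congr S u _ _ m m')) Ag2).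
  by rewrite (kids_congr (allP_all _ (fun u m m' => @cut_congr S u _ _ m m')) Ag2) Hr1 Hr2.
move=> [Pc [H1 H2]].
exists (fun k => if k is k'.+1 then Pc k' else true).
have Ag : agree (fun k => if k is k'.+1 then Pc k' else true) Pc 1 0
  (sumn (map (@deg S) (map (fun c => graft c.1 c.2) (zip ts' segs)))).
  by move=> k Hk; rewrite addn1 addn0.
rewrite UCs_node cut_node /=.
rewrite (kids_congr (allP_all _ (fun u m m' => @UCs_congr S u _ _ m m')) Ag) H1.
by rewrite (kids_congr (allP_all _ (fun u m m' => @cut_congr S u _ _ m m')) Ag) H2 E1 E2 Hfl.
Qed.

End Graft.


Section Anc.
Variables (S : Type).
Notation tm := (term S).

Lemma size_anc_go (t : tm) A n : size (anc_go A n t) = deg t.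
Proof.
elim/term_ind': t A n => // s ts IH A n; rewrite anc_go_node /= size_flatten.
congr (_.+1); elim: ts IH n.+1 => //= u ts IHl [Hu Hts] m.
by rewrite /shape /= Hu -/(shape _) (IHl Hts).
Qed.

Definition AOK (P : pred nat) n (L : seq (seq nat)) :=
  all (fun p => P p.1 ==> all P p.2) (zip (iota n (size L)) L).

Lemma AOK_cons P n a L : AOK P n (a :: L) = (P n ==> all P a) && AOK P n.+1 L.
Proof. by []. Qed.

Lemma AOK_cat P n L1 L2 : AOK P n (L1 ++ L2) = AOK P n L1 && AOK P (n + size L1) L2.
Proof.
elim: L1 n => [|a L1 IH] n; first by rewrite addn0.
by rewrite cat_cons !AOK_cons IH /= addSnnS andbA.
Qed.

Lemma AOK_kids P A (ts : seq tm) m :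
  AOK P m (flatten (kids (anc_go A) m ts)) =
  all id (kids (fun m u => AOK P m (anc_go A m u)) m ts).
Proof. by elim: ts m => //= u ts IH m; rewrite AOK_cat size_anc_go IH. Qed.

Lemma AOK_anc (t : tm) P A n :
  AOK P n (anc_go A n t) = if all P A then UCs P n t else NoneP P n t.
Proof.
elim/term_ind': t A n => [|s ts IH] A n; first by case: (all P A).
rewrite anc_go_node AOK_cons AOK_kids.
rewrite (kids_ext (G := fun m u => if all P (n :: A) then UCs P m u else NoneP P m u));
  last by elim: ts IH => //= u ts IHl [Hu Hts]; split; [move=> m; apply: Hu| apply: IHl].
rewrite UCs_node NoneP_node /=.
by case: (P n); case: (all P A).
Qed.

Fixpoint UCF (P : pred nat) (m : nat) (f : forest S) : bool :=
  if f is t :: f' then UCs P m t && UCF P (m + deg t) f' else true.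

Lemma size_ancs_from (f : forest S) m : size (ancs_from m f) = degf f.
Proof. by elim: f m => //= t f IH m; rewrite size_cat size_anc_go IH. Qed.

Lemma AOK_ancs P (f : forest S) m : AOK P m (ancs_from m f) = UCF P m f.
Proof.
by elim: f m => //= t f IH m; rewrite AOK_cat AOK_anc /= size_anc_go IH.
Qed.

Lemma all_flatten (T : Type) (p : pred T) (L : seq (seq T)) :
  all p (flatten L) = all (all p) L.
Proof. by elim: L => //= a L IH; rewrite all_cat IH. Qed.

Lemma anc_go_bound (t : tm) A n b : all (fun x => x < b) A -> n + deg t <= b ->
  all (fun a => all (fun x => x < b) a) (anc_go A n t).
Proof.
elim/term_ind': t A n => [|s ts IH] A n HA Hb //.
rewrite anc_go_node /= HA /= all_flatten.
have Hn : n < b by move: Hb => /=; lia.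
have : n.+1 + sumn (map (@deg S) ts) <= b by move: Hb => /=; lia.
elim: ts IH n.+1 {Hb} => //= u ts IHl [Hu Hts] m Hm.
rewrite Hu /= ?Hn ?HA //; last by lia.
by apply: IHl => //; lia.
Qed.

Lemma ancs_from_bound (f : forest S) m b : m + degf f <= b ->
  all (fun a => all (fun x => x < b) a) (ancs_from m f).
Proof.
elim: f m => //= t f IH m Hb; rewrite all_cat anc_go_bound //=; last first.
  by move: Hb; rewrite /degf /=; lia.
by apply: IH; move: Hb; rewrite /degf /=; lia.
Qed.

Lemma AOKP P n L : AOK P n L <-> (forall j, j < size L -> P (n + j) -> all P (nth [::] L j)).
Proof.
elim: L n => [|a L IH] n; first by split.
rewrite AOK_cons; split.
  move=> /andP[H1 /IH H2] [|j] /= Hj; first by rewrite addn0 => /(implyP H1).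
  by rewrite -addSnnS; apply: H2.
move=> H; apply/andP; split.
  by apply/implyP => Pn; have := H 0 isT; rewrite addn0; apply.
by apply/IH => j Hj; rewrite addSnnS; apply: (H j.+1).
Qed.

End Anc.


Fixpoint bits n : seq (seq bool) :=
  if n is n'.+1 then [seq x :: b | x <- [:: true; false], b <- bits n'] else [:: [::]].

Lemma mem_map_cons (x y : bool) b (s : seq (seq bool)) :
  (y :: b \in map (cons x) s) = (x == y) && (b \in s).
Proof.
apply/mapP/andP => [[b' Hb' [-> ->]] | [/eqP -> Hb]]; first by rewrite eqxx.
by exists b.
Qed.

Lemma mem_bits n b : (b \in bits n) = (size b == n).
Proof.
elim: n b => [|n IH] [|x b] //=.
  by rewrite !mem_cat; apply/negP; case/or3P => // /mapP [? _].
by rewrite !mem_cat !mem_map_cons IH; case: x; rewrite ?orbF.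
Qed.

Lemma uniq_bits n : uniq (bits n).
Proof.
elim: n => //= n IH; rewrite cats0 cat_uniq !map_inj_uniq //; try by move=> ? ? [].
rewrite IH /= andbT; apply/hasPn => b /mapP [b' _ ->] /=.
by rewrite mem_map_cons.
Qed.

Section Sums.
Variable R : nmodType.
Local Open Scope ring_scope.

Lemma sum_bits_cat m n (F : seq bool -> R) :
  \sum_(b <- bits (m + n)) F b = \sum_(b1 <- bits m) \sum_(b2 <- bits n) F (b1 ++ b2).
Proof.
elim: m F => [|m IH] F; first by rewrite /= big_cons big_nil addr0.
rewrite addSn.
rewrite (_ : bits (m + n).+1 = [seq x :: b | x <- [:: true; false], b <- bits (m + n)]) //.
rewrite (_ : bits m.+1 = [seq x :: b | x <- [:: true; false], b <- bits m]) //.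
rewrite !big_allpairs_dep; apply: eq_bigr => x _; exact: (IH (fun b => F (x :: b))).
Qed.

Definition bset d (b : seq bool) : {set 'I_d} := [set i : 'I_d | nth false b i].

Lemma sum_sets d (G : {set 'I_d} -> R) :
  \sum_(I : {set 'I_d}) G I = \sum_(b <- bits d) G (bset d b).
Proof.
rewrite -(big_map (bset d) xpredT G); apply: perm_big.
apply: uniq_perm; first exact: index_enum_uniq.
  rewrite map_inj_in_uniq ?uniq_bits // => b b'; rewrite !mem_bits => /eqP Hb /eqP Hb' E.
  apply: (@eq_from_nth _ false); first by rewrite Hb Hb'.
  move=> k; rewrite Hb => Hk.
  have := congr1 (fun I : {set 'I_d} => Ordinal Hk \in I) E; by rewrite !inE.
move=> I; rewrite mem_index_enum; symmetry; apply/mapP.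
exists [seq i \in I | i <- enum 'I_d]; first by rewrite mem_bits size_map size_enum_ord.
apply/setP => i; rewrite inE (nth_map i) ?size_enum_ord //.
by rewrite nth_ord_enum.
Qed.

End Sums.


Section Forest.
Variables (S : Type).
Notation tm := (term S).

Lemma agree_sub P P' m m' d d' : agree P P' m m' d -> d' <= d -> agree P P' m m' d'.
Proof. by move=> H Hd k Hk; apply: (H k); lia. Qed.

Lemma agree_shift P P' m m' d e : agree P P' m m' (e + d) ->
  agree P P' (m + e) (m' + e) d.
Proof. by move=> H k Hk; rewrite [m + e]addnC [m' + e]addnC !addnA; apply: (H (k + e)); lia. Qed.

Lemma restr_from_congr (f : forest S) P P' m m' : agree P P' m m' (degf f) ->
  restr_from P m f = restr_from P' m' f.
Proof.
elim: f m m' => //= t f IH m m' H.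
rewrite (@restr_go_congr S t P P' m m'); last by apply: agree_sub H _; rewrite /degf /=; lia.
by rewrite (IH (m + deg t) (m' + deg t)) //; apply: agree_shift.
Qed.

Lemma UCF_congr (f : forest S) P P' m m' : agree P P' m m' (degf f) ->
  UCF P m f = UCF P' m' f.
Proof.
elim: f m m' => //= t f IH m m' H.
rewrite (@UCs_congr S t P P' m m'); last by apply: agree_sub H _; rewrite /degf /=; lia.
by rewrite (IH (m + deg t) (m' + deg t)) //; apply: agree_shift.
Qed.

Lemma agree_neg P P' m m' d : agree P P' m m' d ->
  agree (fun k => ~~ P k) (fun k => ~~ P' k) m m' d.
Proof. by move=> H k Hk; rewrite H. Qed.

Lemma in_set_nat_bset d b k : size b = d -> in_set_nat (bset d b) k = nth false b k.
Proof.
move=> Hs; rewrite /in_set_nat; case: insubP => [i Hk <- | Hk]; first by rewrite inE.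
by rewrite nth_default // Hs leqNgt.
Qed.

Lemma in_set_nat_bsetC d b k : size b = d ->
  in_set_nat (~: bset d b) k = (k < d) && ~~ nth false b k.
Proof.
move=> Hs; rewrite /in_set_nat; case: insubP => [i Hk <- | Hk]; first by rewrite !inE ltn_ord.
by rewrite (negPf Hk).
Qed.

Definition upc (f : forest S) (I : {set 'I_(degf f)}) :=
  [forall i : 'I_(degf f), forall j : 'I_(degf f),
      ((j \in I) && is_anc f i j) ==> (i \in I)].

Lemma admissibleE (f : forest S) (I1 I2 : {set 'I_(degf f)}) :
  admissible I1 I2 = (I2 == ~: I1) && upc I1.
Proof.
rewrite /admissible /upc.
case: (boolP (I2 == ~: I1)) => [/eqP -> | NE] /=.
  rewrite finset.disjoints_subset finset.setCK subxx /=.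
  have -> : [forall k, (k \in I1) || (k \in ~: I1)] by apply/forallP => k; rewrite inE orbN.
  rewrite /=; case: (boolP [forall i, forall j, _]) => //= H.
  apply/forallP => i; apply/forallP => j; apply/implyP; rewrite !inE => /andP[Hi Ha].
  apply/negP => Hj; move/forallP: H => /(_ i) /forallP /(_ j).
  by rewrite Hj Ha /= (negPf Hi).
apply/negP => /and4P[D C _ _]; case/negP: NE; apply/eqP/setP => k.
rewrite !inE; move/forallP: C => /(_ k).
case: (boolP (k \in I1)) => //= Hk _.
by move: D; rewrite finset.disjoints_subset => /fintype.subsetP /(_ k); rewrite !inE Hk => /(_ isT) /negPf.
Qed.

Lemma upc_bset (f : forest S) b : size b = degf f ->
  upc (bset (degf f) b) = UCF (nth false b) 0 f.
Proof.
move=> Hs; rewrite -AOK_ancs /upc.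
have Hb := @ancs_from_bound S f 0 (0 + degf f) (leqnn _).
have HL := size_ancs_from f 0.
apply/idP/idP => [H | /AOKP H].
  apply/AOKP => j Hj Pj; apply/seq.allP => x Hx.
  have Hxd : x < degf f.
    move/seq.allP: Hb => /(_ _ (mem_nth [::] Hj)) /seq.allP /(_ x Hx); by rewrite add0n.
  have Hjd : j < degf f by rewrite -HL.
  move/forallP: H => /(_ (Ordinal Hxd)) /forallP /(_ (Ordinal Hjd)).
  by rewrite !inE /= Pj /is_anc Hx /=.
apply/forallP => i; apply/forallP => j; apply/implyP; rewrite !inE => /andP[Hj Ha].
have := H j; rewrite HL ltn_ord add0n => /(_ isT Hj) /seq.allP; apply.
exact: Ha.
Qed.

End Forest.

Section Split.
Variables (K : fieldType) (T : eqType).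
Local Open Scope ring_scope.

Lemma sum_split (A B g : seq T) :
  \sum_(i < (size g).+1) (((A == take i g) && (B == drop i g))%:R : K) = ((A ++ B == g)%:R).
Proof.
case: (boolP (A ++ B == g)) => [/eqP <- | NE].
  have Hi : (size A < (size (A ++ B)).+1)%N by rewrite size_cat ltnS leq_addr.
  rewrite (bigD1 (Ordinal Hi)) //= take_size_cat // drop_size_cat // !eqxx /=.
  rewrite big1 ?addr0 // => i /eqP Ni.
  case: (boolP (A == take i (A ++ B))) => //= /eqP EA.
  case: Ni; apply: val_inj => /=.
  have := congr1 size EA; rewrite size_take_min => ->.
  by have := ltn_ord i; rewrite ltnS => /minn_idPl ->.
rewrite big1 // => i _.
case: (boolP (A == take i g)) => //= /eqP EA.
case: (boolP (B == drop i g)) => //= /eqP EB.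
by case/negP: NE; rewrite EA EB cat_take_drop.
Qed.

End Split.


Section Main.
Variables (K : fieldType) (S : Type) (ar : S -> nat).
Notation tm := (term S).
Local Open Scope ring_scope.
Local Open Scope classical_set_scope.

Lemma DeltaT_bits (t : tm) h1 h2 : wf ar t ->
  DeltaT K ar t h1 h2 = \sum_(b <- bits (deg t)) (UCs (nth false b) 0 t &&
     (rd [:: (restr_go (nth false b) 0 t).1] ++ (restr_go (nth false b) 0 t).2 == h1) &&
     (rd [:: (restr_go (fun k => ~~ nth false b k) 0 t).1] ++
         (restr_go (fun k => ~~ nth false b k) 0 t).2 == h2))%:R.
Proof.
move=> wt.
set decs := [seq cut (nth false b) 0 t | b <- [seq b <- bits (deg t) | UCs (nth false b) 0 t]].
have Hset : decomp ar t = [set` decs].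
  apply/seteqP; split => -[t' us] /=.
    rewrite /decomp /= => -[w1 w2 Hsz Hg].
    have [P [HU HC]] := cut_exists Hsz.
    rewrite Hg in HU HC.
    set b := mkseq P (deg t).
    have Ag : agree (nth false b) P 0 0 (deg t) by move=> k Hk; rewrite !addn0 nth_mkseq.
    apply/mapP; exists b; last by rewrite (cut_congr Ag) HC.
    by rewrite mem_filter mem_bits size_mkseq eqxx (UCs_congr Ag) HU.
  move=> /mapP [b]; rewrite mem_filter => /andP[HU Hb] E.
  have := cut_decomp (nth false b) 0 wt; rewrite -E /= => -[h1' h2' h3' h4'].
  by rewrite /decomp /=; split.
have Hu : uniq decs.
  rewrite map_inj_in_uniq ?filter_uniq ?uniq_bits // => b b'.
  rewrite !mem_filter !mem_bits => /andP[U /eqP Sb] /andP[U' /eqP Sb'] E.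
  have Ag := cut_inj U U' (congr1 fst E).
  apply: (@eq_from_nth _ false); first by rewrite Sb Sb'.
  by move=> k; rewrite Sb => Hk; have := Ag k Hk; rewrite !addn0.
rewrite /DeltaT Hset -(fsbig_seq _ _ Hu) big_map big_filter big_mkcond.
apply: eq_bigr => b _; case: (boolP (UCs (nth false b) 0 t)) => HU //=.
by rewrite (cut_restr HU) -(cut_restr_neg HU) /= cats0.
Qed.


Lemma ind_mul (a b : bool) : (a%:R : K) * b%:R = (a && b)%:R.
Proof. by case: a; case: b; rewrite ?mul1r ?mul0r. Qed.

Lemma G4 (T : eqType) (U1 U2 : bool) (A1 A2 B1 B2 g1 g2 : seq T) :
  \sum_(i < (size g1).+1) \sum_(j < (size g2).+1)
    ((U1 && (A1 == take i g1) && (B1 == take j g2))%:R *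
     (U2 && (A2 == drop i g1) && (B2 == drop j g2))%:R : K) =
  (U1 && U2 && (A1 ++ A2 == g1) && (B1 ++ B2 == g2))%:R.
Proof.
have ind4 (u1 u2 a1 a2 b1 b2 : bool) : ((u1 && a1 && b1)%:R * (u2 && a2 && b2)%:R : K)
    = (u1 && u2)%:R * ((a1 && a2)%:R * (b1 && b2)%:R).
  by rewrite !ind_mul; congr (_%:R); case: u1; case: u2; case: a1; case: a2; case: b1; case: b2.
under eq_bigr => i _ do under eq_bigr => j _ do rewrite ind4.
under eq_bigr => i _ do rewrite -mulr_sumr -mulr_sumr sum_split.
by rewrite -mulr_sumr -mulr_suml !sum_split !ind_mul andbA.
Qed.

Lemma sum4_swap (I J A B : Type) (rI : seq I) (rJ : seq J) (rA : seq A) (rB : seq B)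
  (F : I -> J -> A -> B -> K) :
  \sum_(i <- rI) \sum_(j <- rJ) \sum_(a <- rA) \sum_(b <- rB) F i j a b =
  \sum_(a <- rA) \sum_(b <- rB) \sum_(i <- rI) \sum_(j <- rJ) F i j a b.
Proof.
under eq_bigr => i _ do rewrite exchange_big.
rewrite exchange_big; apply: eq_bigr => a _.
under eq_bigr => i _ do rewrite exchange_big.
by rewrite exchange_big.
Qed.

Lemma Delta_cons (t : tm) f : Delta K ar (t :: f) = tmul (DeltaT K ar t) (Delta K ar f).
Proof. by []. Qed.

Lemma Delta_bits (f : forest S) : reduced ar f -> forall g1 g2,
  Delta K ar f g1 g2 = \sum_(b <- bits (degf f)) (UCF (nth false b) 0 f &&
     (restr_from (nth false b) 0 f == g1) &&
     (restr_from (fun k => ~~ nth false b k) 0 f == g2))%:R.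
Proof.
elim: f => [|t f IH].
  by move=> _ g1 g2; rewrite /= big_cons big_nil addr0 /Delta /= /tunit; case: g1; case: g2.
move=> rtf g1 g2; case/andP: rtf => /andP[_ wt] rf.
rewrite Delta_cons /tmul.
under eq_bigr => i _ do under eq_bigr => j _ do
  rewrite (DeltaT_bits _ _ wt) (IH rf) big_distrlr.
rewrite sum4_swap (_ : degf (t :: f) = deg t + degf f) // sum_bits_cat.
rewrite big_seq [RHS]big_seq; apply: eq_bigr => b1; rewrite mem_bits => /eqP Hb1.
rewrite big_seq [RHS]big_seq; apply: eq_bigr => b2; rewrite mem_bits => /eqP Hb2.
rewrite G4.
have Ag1 : agree (nth false (b1 ++ b2)) (nth false b1) 0 0 (deg t).
  by move=> k Hk; rewrite !addn0 nth_cat Hb1 Hk.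
have Ag2 : agree (nth false (b1 ++ b2)) (nth false b2) (0 + deg t) 0 (degf f).
  by move=> k Hk; rewrite add0n addn0 nth_cat Hb1 ltnNge leq_addl /= addnK.
rewrite /= (UCs_congr Ag1) (UCF_congr Ag2) (restr_go_congr Ag1) (restr_from_congr Ag2).
rewrite (restr_go_congr (agree_neg Ag1)) (restr_from_congr (agree_neg Ag2)).
by rewrite !catA.
Qed.

End Main.

Local Open Scope ring_scope.

Theorem proposition3p3 (K : fieldType) (charK0 : [pchar K] =i pred0)
    (S : Type) (ar : S -> nat) (f : forest S) (redf : reduced ar f)
    (g1 g2 : forest S) :
  Delta K ar f g1 g2 =
  \sum_(I1 : {set 'I_(degf f)}) \sum_(I2 : {set 'I_(degf f)})
     [&& admissible I1 I2, restr I1 == g1 & restr I2 == g2]%:R.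
Proof.
symmetry.
under eq_bigr => I1 _ do under eq_bigr => I2 _ do rewrite admissibleE.
have col (T : finType) (x : T) (u v : bool) (w : T -> bool) :
    \sum_(y : T) (((y == x) && u) && (v && w y))%:R = (u && (v && w x))%:R :> K.
  by rewrite (bigD1 x) //= eqxx big1 ?addr0 // => y /negPf ->.
under eq_bigr => I1 _ do rewrite col.
rewrite (Delta_bits _ redf) sum_sets big_seq [RHS]big_seq; apply: eq_bigr => b; rewrite mem_bits => /eqP Hb.
rewrite upc_bset //.
have Ag1 : agree (in_set_nat (bset (degf f) b)) (nth false b) 0 0 (degf f).
  by move=> k Hk; rewrite in_set_nat_bset.
have Ag2 : agree (in_set_nat (~: bset (degf f) b)) (fun k => ~~ nth false b k) 0 0 (degf f).
  by move=> k Hk; rewrite in_set_nat_bsetC // addn0 Hk.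
by rewrite /restr (restr_from_congr Ag1) (restr_from_congr Ag2) !andbA.
Qed.
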